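(* The class $\mathrm{TM}_r(d)$ is closed under ultraproducts and ultraroots. That is: (a) for every family $(G_i)_{i\in I}$ of graphs in $\mathrm{TM}_r(d)$ and every ultrafilter $U$ on $I$, the ultraproduct $\prod_{i\in I} G_i/U$ belongs to $\mathrm{TM}_r(d)$; and (b) for every graph $H$, if some ultrapower $\prod_{i\in I} H/U$ of $H$ (for an ultrafilter $U$ on an index set $I$) belongs to $\mathrm{TM}_r(d)$, then $H$ belongs to $\mathrm{TM}_r(d)$.
   Context: Graphs are simple undirected graphs (structures over an irreflexive symmetric binary relation $E$) of arbitrary cardinality. A tree model of $r$ labels and height $d$ is a pair $(t,S)$ where $t$ is an $(r+1)$-labeled rooted tree (a possibly infinite tree with a distinguished root whose nodes are partitioned into label classes $P_1,\dots,P_{r+1}$) and $S \subseteq [r]^2\times[d]$ such that: every root-to-leaf path has length exactly $d$; leaves are labeled from $[r]$ and internal nodes with $r+1$; $(i,j,l)\in S$ iff $(j,i,l)\in S$. It is a tree model of the graph whose vertices are the leaves of $t$, two leaves with labels $i,j$ at distance $2l$ in $t$ being adjacent iff $(i,j,l)\in S$. $\mathrm{TM}_r(d)$ is the class of all graphs isomorphic to a graph having such a tree model. The ultraproduct $\prod_{i\in I}A_i/U$ has as universe the classes of $\prod_i A_i$ under $\bar a\sim\bar b$ iff $\{i: a_i=b_i\}\in U$, with a relation holding on classes iff it holds coordinatewise on a set of indices in $U$; when all $A_i=A$ it is the ultrapower of $A$, and $A$ is its ultraroot. *)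

(* Defs.v *)
From Stdlib Require Import Arith.

Definition is_graph (V : Type) (E : V -> V -> Prop) : Prop :=
  (forall x, ~ E x x) /\ (forall x y, E x y -> E y x).

Definition graph_iso (V W : Type) (E : V -> V -> Prop) (F : W -> W -> Prop)
  (f : V -> W) : Prop :=
  (forall x y, f x = f y -> x = y) /\
  (forall w, exists v, f v = w) /\
  (forall x y, E x y <-> F (f x) (f y)).

(* A rooted tree on node type N: a root, a parent map (par root = root) and a
   depth function with dep root = 0 and dep v = dep (par v) + 1 for v <> root.
   (Hence every node reaches the root by iterating par, i.e. the structure is a
   rooted tree, and dep is the distance to the root.) *)
Definition rooted_tree (N : Type) (root : N) (par : N -> N) (dep : N -> nat) :=
  par root = root /\ dep root = 0 /\
  (forall v, v <> root -> dep v = S (dep (par v))).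

Definition is_child (N : Type) (root : N) (par : N -> N) (w v : N) : Prop :=
  w <> root /\ par w = v.

Definition is_leaf (N : Type) (root : N) (par : N -> N) (v : N) : Prop :=
  ~ exists w, is_child N root par w v.

(* Two leaves x, y (both at depth d) are at tree distance 2l iff their lowest
   common ancestor is l levels above them. *)
Definition leaf_dist_half (N : Type) (par : N -> N) (x y : N) (l : nat) : Prop :=
  Nat.iter l par x = Nat.iter l par y /\
  (forall k, k < l -> Nat.iter k par x <> Nat.iter k par y).

Definition tree_model (r d : nat) (N : Type) (root : N) (par : N -> N)
  (dep : N -> nat) (lab : N -> nat) (S : nat -> nat -> nat -> Prop) : Prop :=
  rooted_tree N root par dep /\
  (forall v, dep v <= d) /\
  (forall v, is_leaf N root par v -> dep v = d) /\
  (forall v, is_leaf N root par v -> 1 <= lab v <= r) /\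
  (forall v, ~ is_leaf N root par v -> lab v = r + 1) /\
  (forall i j l, S i j l -> (1 <= i <= r /\ 1 <= j <= r /\ 1 <= l <= d)) /\
  (forall i j l, S i j l <-> S j i l).

Definition tm_leaf (N : Type) (root : N) (par : N -> N) : Type :=
  { v : N | is_leaf N root par v }.

Definition tm_edge (N : Type) (root : N) (par : N -> N) (lab : N -> nat)
  (S : nat -> nat -> nat -> Prop) (x y : tm_leaf N root par) : Prop :=
  exists l, leaf_dist_half N par (proj1_sig x) (proj1_sig y) l /\
            S (lab (proj1_sig x)) (lab (proj1_sig y)) l.

Definition TM (r d : nat) (V : Type) (E : V -> V -> Prop) : Prop :=
  exists (N : Type) (root : N) (par : N -> N) (dep : N -> nat)
         (lab : N -> nat) (S : nat -> nat -> nat -> Prop),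
    tree_model r d N root par dep lab S /\
    exists f : tm_leaf N root par -> V,
      graph_iso (tm_leaf N root par) V (tm_edge N root par lab S) E f.

Definition ultrafilter (I : Type) (U : (I -> Prop) -> Prop) : Prop :=
  U (fun _ => True) /\
  ~ U (fun _ => False) /\
  (forall A B : I -> Prop, U A -> (forall i, A i -> B i) -> U B) /\
  (forall A B : I -> Prop, U A -> U B -> U (fun i => A i /\ B i)) /\
  (forall A : I -> Prop, U A \/ U (fun i => ~ A i)).

Definition up_class (I : Type) (V : I -> Type) (U : (I -> Prop) -> Prop)
  (a : forall i, V i) : (forall i, V i) -> Prop :=
  fun b => U (fun i => a i = b i).

Definition ultraprod (I : Type) (V : I -> Type) (U : (I -> Prop) -> Prop) : Type :=
  { P : (forall i, V i) -> Prop | exists a, P = up_class I V U a }.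

Definition ultraprod_rel (I : Type) (V : I -> Type) (U : (I -> Prop) -> Prop)
  (E : forall i, V i -> V i -> Prop) (P Q : ultraprod I V U) : Prop :=
  exists a b, proj1_sig P = up_class I V U a /\ proj1_sig Q = up_class I V U b /\
              U (fun i => E i (a i) (b i)).

(* Main.v *)
Require Import Defs.
From Stdlib Require Import Arith Lia Classical ClassicalEpsilon ClassicalDescription FunctionalExtensionality PropExtensionality ProofIrrelevance.

Lemma uf_up {I U} (HU : ultrafilter I U) {A B : I -> Prop} : U A -> (forall i, A i -> B i) -> U B.
Proof. destruct HU as (_&_&H&_); eauto. Qed.
Lemma uf_and {I U} (HU : ultrafilter I U) {A B : I -> Prop} : U A -> U B -> U (fun i => A i /\ B i).
Proof. destruct HU as (_&_&_&H&_); eauto. Qed.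
Lemma uf_T {I U} (HU : ultrafilter I U) {A : I -> Prop} : (forall i, A i) -> U A.
Proof. intros H. pose proof HU as (HT&_). apply (uf_up HU HT). auto. Qed.
Lemma uf_ne {I U} (HU : ultrafilter I U) {A : I -> Prop} : U A -> exists i, A i.
Proof. intros H. apply NNPP; intro Hn. pose proof HU as (_&HF&_).
  apply HF. apply (uf_up HU H). intros i Hi; apply Hn; eauto. Qed.
Lemma uf_em {I U} (HU : ultrafilter I U) (A : I -> Prop) : U A \/ U (fun i => ~ A i).
Proof. destruct HU as (_&_&_&_&H); eauto. Qed.
Lemma uf_not {I U} (HU : ultrafilter I U) {A : I -> Prop} : ~ U A -> U (fun i => ~ A i).
Proof. intros H. destruct (uf_em HU A); tauto. Qed.
Lemma uf_notU {I U} (HU : ultrafilter I U) {A : I -> Prop} : U (fun i => ~ A i) -> ~ U A.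
Proof. intros H1 H2. destruct (uf_ne HU (uf_and HU H1 H2)) as [i [? ?]]; tauto. Qed.

Lemma uf_fin_ex {I U} (HU : ultrafilter I U) (Q : nat -> I -> Prop) n :
  U (fun i => exists l, l < n /\ Q l i) -> exists l, l < n /\ U (Q l).
Proof.
  induction n; intros H.
  - destruct (uf_ne HU H) as [i [l [Hl _]]]; lia.
  - destruct (uf_em HU (Q n)) as [Hq|Hq]. exists n; split; auto.
    destruct IHn as [l [Hl Hl']].
    + apply (uf_up HU (uf_and HU H Hq)). intros i [[l [Hl Hl']] Hn].
      exists l; split; auto. assert (l <> n) by (intro; subst; tauto). lia.
    + exists l; split; auto.
Qed.

Lemma uf_fin_all {I U} (HU : ultrafilter I U) (Q : nat -> I -> Prop) n :
  (forall k, k < n -> U (Q k)) -> U (fun i => forall k, k < n -> Q k i).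
Proof.
  induction n; intros H.
  - apply (uf_T HU); intros; lia.
  - apply (uf_up HU (uf_and HU (IHn (fun k Hk => H k ltac:(lia))) (H n ltac:(lia)))).
    intros i [H1 H2] k Hk. destruct (Nat.eq_dec k n). subst; auto. apply H1; lia.
Qed.

Definition cls {I V U} (a : forall i : I, V i) : ultraprod I V U :=
  exist _ (up_class I V U a) (ex_intro _ a eq_refl).

Lemma cls_eq {I V U} (HU : ultrafilter I U) (a b : forall i : I, V i) :
  @cls I V U a = cls b <-> U (fun i => a i = b i).
Proof.
  split.
  - intros H. assert (H' : up_class I V U a b = up_class I V U b b) by
      (change (proj1_sig (@cls I V U a) b = proj1_sig (@cls I V U b) b); rewrite H; auto).
    change (up_class I V U a b); rewrite H'. unfold up_class. apply (uf_T HU); auto.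
  - intros H. unfold cls. apply eq_sig_hprop. intros; apply proof_irrelevance.
    simpl. apply functional_extensionality; intro c. apply propositional_extensionality.
    unfold up_class; split; intro H2.
    + apply (uf_up HU (uf_and HU H H2)). intros i [-> ->]; auto.
    + apply (uf_up HU (uf_and HU H H2)). intros i [-> ->]; auto.
Qed.

Definition rep {I V U} (P : ultraprod I V U) : forall i, V i :=
  proj1_sig (constructive_indefinite_description _ (proj2_sig P)).

Lemma rep_cls {I V U} (P : ultraprod I V U) : cls (rep P) = P.
Proof.
  unfold rep. destruct (constructive_indefinite_description _ _) as [a Ha]. simpl.
  unfold cls. apply eq_sig_hprop. intros; apply proof_irrelevance. simpl. auto.
Qed.

Lemma cls_surj {I V U} (P : ultraprod I V U) : exists a, P = cls a.
Proof. exists (rep P). symmetry; apply rep_cls. Qed.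

Lemma rep_of_cls {I V U} (HU : ultrafilter I U) a : U (fun i => rep (@cls I V U a) i = a i).
Proof. apply (cls_eq HU). apply rep_cls. Qed.

Definition umap {I V W U} (F : forall i, V i -> W i) (P : ultraprod I V U) : ultraprod I W U :=
  cls (fun i => F i (rep P i)).

Lemma umap_cls {I V W U} (HU : ultrafilter I U) (F : forall i, V i -> W i) a :
  umap F (@cls I V U a) = cls (fun i => F i (a i)).
Proof. unfold umap. apply (cls_eq HU). apply (uf_up HU (rep_of_cls HU a)).
  intros i ->; auto. Qed.

Definition ulim {I} U (g : I -> nat) : nat := epsilon (inhabits 0) (fun n => U (fun i => g i = n)).

Lemma uf_bounded {I U} (HU : ultrafilter I U) (g : I -> nat) d :
  (forall i, g i <= d) -> exists n, U (fun i => g i = n).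
Proof. intros H. destruct (uf_fin_ex HU (fun l i => g i = l) (S d)) as [l [_ Hl]].
  apply (uf_T HU). intros i; exists (g i); split; auto. specialize (H i); lia. eauto. Qed.

Lemma ulim_spec {I U} (HU : ultrafilter I U) (g : I -> nat) d :
  (forall i, g i <= d) -> U (fun i => g i = ulim U g).
Proof. intros H. unfold ulim. apply epsilon_spec. eapply uf_bounded; eauto. Qed.

Lemma ulim_eq {I U} (HU : ultrafilter I U) (g : I -> nat) d n :
  (forall i, g i <= d) -> U (fun i => g i = n) -> ulim U g = n.
Proof. intros H H2. destruct (uf_ne HU (uf_and HU H2 (ulim_spec HU g d H))) as [i [? ?]]; congruence. Qed.

Lemma iter_S_r {A} (f : A -> A) k x : Nat.iter (S k) f x = Nat.iter k f (f x).
Proof. induction k; simpl; auto. simpl in IHk. rewrite IHk. auto. Qed.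

Lemma tm_dep_le_iter r d N root par dep lab SS (HT : tree_model r d N root par dep lab SS) k x :
  dep (Nat.iter k par x) <= dep x.
Proof.
  destruct HT as ((Hpr&Hdr&Hdp)&_). induction k; simpl; auto.
  set (u := Nat.iter k par x) in *. destruct (classic (u = root)) as [E|E].
  assert (Hpu : par u = u) by (rewrite E; auto). rewrite Hpu; auto. rewrite (Hdp u E) in IHk. lia.
Qed.

Lemma tm_iter_same r d N root par dep lab SS (HT : tree_model r d N root par dep lab SS) k x :
  dep (Nat.iter k par x) = dep x -> Nat.iter k par x = x.
Proof.
  pose proof (tm_dep_le_iter r d N root par dep lab SS HT) as Hle.
  destruct HT as ((Hpr&Hdr&Hdp)&_). induction k; simpl; auto. intros Hd.
  set (u := Nat.iter k par x) in *. destruct (classic (u = root)) as [E|E].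
  - assert (Hpu : par u = u) by (rewrite E; auto). rewrite Hpu in *. apply IHk; auto.
  - specialize (Hle k x). fold u in Hle. rewrite (Hdp u E) in Hle. lia.
Qed.

Lemma tm_child_below r d N root par dep lab SS (HT : tree_model r d N root par dep lab SS) k x :
  dep (Nat.iter k par x) < dep x -> exists j, Nat.iter j par x <> root /\ par (Nat.iter j par x) = Nat.iter k par x.
Proof.
  pose proof HT as ((Hpr&Hdr&Hdp)&_). induction k; simpl; intros Hd. lia.
  set (u := Nat.iter k par x) in *. destruct (classic (u = root)) as [E|E].
  - assert (Hpu : par u = u) by (rewrite E; auto). rewrite Hpu in *. auto.
  - exists k. split; auto.
Qed.

Lemma tm_iter_root r d N root par dep lab SS (HT : tree_model r d N root par dep lab SS) x :
  Nat.iter (dep x) par x = root.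
Proof.
  pose proof HT as ((Hpr&Hdr&Hdp)&_).
  remember (dep x) as n. revert x Heqn. induction n; intros x Hx; simpl.
  - apply NNPP; intro E. rewrite (Hdp x E) in Hx. discriminate.
  - assert (E : x <> root) by (intro; subst; congruence).
    rewrite (Hdp x E) in Hx. injection Hx as Hx.
    change (Nat.iter (S n) par x = root). rewrite iter_S_r. auto.
Qed.

Lemma tm_leaf_iff r d N root par dep lab SS (HT : tree_model r d N root par dep lab SS) v :
  is_leaf N root par v <-> dep v = d.
Proof.
  pose proof HT as ((Hpr&Hdr&Hdp)&Hle&Hl&_). split; auto.
  intros Hd [w [Hw Hpw]]. specialize (Hdp w Hw). specialize (Hle w). subst. lia.
Qed.

Lemma tm_has_leaf r d N root par dep lab SS (HT : tree_model r d N root par dep lab SS) :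
  exists v, is_leaf N root par v.
Proof.
  pose proof HT as ((Hpr&Hdr&Hdp)&Hle&_).
  apply NNPP; intro Hn.
  assert (forall k, exists v, dep v = k).
  { induction k. eauto. destruct IHk as [v Hv].
    assert (~ is_leaf N root par v) by (intro; apply Hn; eauto).
    apply NNPP in H. destruct H as [w [Hw Hpw]]. exists w. rewrite Hdp; auto. congruence. }
  destruct (H (S d)) as [v Hv]. specialize (Hle v). lia.
Qed.

Lemma tm_lab_le r d N root par dep lab SS (HT : tree_model r d N root par dep lab SS) v :
  lab v <= S r.
Proof.
  pose proof HT as (_&_&_&Hl1&Hl2&_). destruct (classic (is_leaf N root par v)) as [L|L].
  specialize (Hl1 v L); lia. rewrite (Hl2 v L); lia.
Qed.

Lemma sig_eq_iff {A} {P : A -> Prop} (x y : {a | P a}) : x = y <-> proj1_sig x = proj1_sig y.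
Proof. split. intros ->; auto. intros H. apply eq_sig_hprop; auto. intros; apply proof_irrelevance. Qed.

Lemma TM_nonempty r d W F : TM r d W F -> exists w : W, True.
Proof.
  intros (N&root&par&dep&lab&SS&HT&f&_).
  destruct (tm_has_leaf _ _ _ _ _ _ _ _ HT) as [v Hv]. exists (f (exist _ v Hv)); auto.
Qed.

Lemma TM_induced r d W F H EH (g : H -> W) :
  TM r d W F -> (exists h : H, True) -> (forall x y, g x = g y -> x = y) ->
  (forall x y, EH x y <-> F (g x) (g y)) -> TM r d H EH.
Proof.
  intros (N&root&par&dep&lab&SS&HT&f&Hfi&Hfs&Hfe) [h0 _] Hgi Hge.
  pose proof HT as HT'. destruct HT' as ((Hpr&Hdr&Hdp)&Hle&Hl&Hl1&Hl2&HS1&HS2).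
  set (inG := fun v : N => exists (h : H) (x : tm_leaf N root par) (k : nat),
                 f x = g h /\ Nat.iter k par (proj1_sig x) = v).
  assert (Hroot : inG root).
  { destruct (Hfs (g h0)) as [x Hx]. exists h0, x, (dep (proj1_sig x)). split; auto.
    eapply tm_iter_root; eauto. }
  assert (Hpar : forall v, inG v -> inG (par v)).
  { intros v (h&x&k&E1&E2). exists h, x, (S k). split; auto. simpl. congruence. }
  set (N' := {v : N | inG v}).
  set (root' := exist inG root Hroot : N').
  set (par' := fun v : N' => exist inG (par (proj1_sig v)) (Hpar _ (proj2_sig v)) : N').
  set (dep' := fun v : N' => dep (proj1_sig v)).
  set (lab' := fun v : N' => lab (proj1_sig v)).
  assert (Hiter : forall k v, proj1_sig (Nat.iter k par' v) = Nat.iter k par (proj1_sig v)).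
  { induction k; intros v; simpl; auto. rewrite IHk; auto. }
  assert (Hleaf : forall v : N', is_leaf N' root' par' v <-> is_leaf N root par (proj1_sig v)).
  { intros [v Hv]; simpl. split.
    - intros L. apply (tm_leaf_iff _ _ _ _ _ _ _ _ HT).
      destruct Hv as (h&x&k&E1&E2). pose proof (Hle v).
      destruct (Nat.lt_ge_cases (dep v) d) as [Hlt|Hge']; [|lia].
      exfalso. destruct x as [x Lx]; simpl in *.
      assert (Hdx : dep x = d) by auto. subst v.
      destruct (tm_child_below _ _ _ _ _ _ _ _ HT k x ltac:(lia)) as [j [Hj1 Hj2]].
      apply L. assert (Hin : inG (Nat.iter j par x)) by (exists h, (exist _ x Lx), j; auto).
      exists (exist inG _ Hin). split.
      + intro E. apply Hj1. apply (f_equal (@proj1_sig _ _)) in E. exact E.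
      + apply sig_eq_iff. simpl. auto.
    - intros L [[w Hw] [Hw1 Hw2]]. apply L. exists w. split.
      + intro E. apply Hw1. apply sig_eq_iff. exact E.
      + apply sig_eq_iff in Hw2. exact Hw2. }
  assert (HT2 : tree_model r d N' root' par' dep' lab' SS).
  { split; [|split; [|split; [|split; [|split; [|split]]]]].
    - split; [|split].
      + apply sig_eq_iff; simpl; auto.
      + unfold dep'; simpl; auto.
      + intros v Hv. unfold dep'. apply Hdp. intro E. apply Hv. apply sig_eq_iff. exact E.
    - intros v; apply Hle.
    - intros v L. apply Hl. apply Hleaf; auto.
    - intros v L. apply Hl1. apply Hleaf; auto.
    - intros v L. apply Hl2. rewrite <- Hleaf; auto.
    - exact HS1.
    - exact HS2. }
  assert (Hch : forall v : tm_leaf N' root' par', exists h, forall x : tm_leaf N root par,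
             proj1_sig x = proj1_sig (proj1_sig v) -> g h = f x).
  { intros [[v Hv] L]. simpl. pose proof Hv as (h&x&k&E1&E2). exists h. intros y Hy.
    assert (Lv : is_leaf N root par v) by (apply (Hleaf (exist _ v Hv)); auto).
    destruct x as [x Lx]. simpl in *.
    assert (Hxv : x = v).
    { rewrite <- E2. symmetry. apply (tm_iter_same _ _ _ _ _ _ _ _ HT).
      rewrite E2. rewrite (Hl v Lv), (Hl x Lx). auto. }
    subst. rewrite <- E1. f_equal. apply sig_eq_iff. simpl. congruence. }
  set (G := fun v => proj1_sig (constructive_indefinite_description _ (Hch v))).
  assert (HG : forall v x, proj1_sig x = proj1_sig (proj1_sig v) -> g (G v) = f x).
  { intros v x Hx. unfold G. destruct (constructive_indefinite_description _ _) as [h Hh]. simpl. auto. }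
  assert (Hlf : forall v : tm_leaf N' root' par', is_leaf N root par (proj1_sig (proj1_sig v))).
  { intros [v L]. apply Hleaf. auto. }
  exists N', root', par', dep', lab', SS. split; auto.
  exists G. split; [|split].
  - intros v w E.
    assert (E2 := HG v (exist _ _ (Hlf v)) eq_refl).
    assert (E3 := HG w (exist _ _ (Hlf w)) eq_refl).
    rewrite E in E2. rewrite E2 in E3. apply Hfi in E3.
    apply sig_eq_iff in E3. simpl in E3. apply sig_eq_iff. apply sig_eq_iff. auto.
  - intros h. destruct (Hfs (g h)) as [x Hx].
    assert (Hin : inG (proj1_sig x)) by (exists h, x, 0; auto).
    assert (L : is_leaf N' root' par' (exist inG _ Hin)) by (apply Hleaf; simpl; apply (proj2_sig x)).
    exists (exist _ _ L). apply Hgi. rewrite (HG _ x); auto.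
  - intros v w. rewrite Hge.
    rewrite (HG v (exist _ _ (Hlf v)) eq_refl), (HG w (exist _ _ (Hlf w)) eq_refl).
    rewrite <- Hfe. unfold tm_edge, leaf_dist_half. simpl.
    split; intros [l [[H1 H2] H3]]; exists l; repeat split; auto.
    + apply sig_eq_iff in H1. rewrite !Hiter in H1. auto.
    + intros k Hk E. apply (H2 k Hk). apply sig_eq_iff. rewrite !Hiter. auto.
    + apply sig_eq_iff. rewrite !Hiter. auto.
    + intros k Hk E. apply (H2 k Hk). apply sig_eq_iff in E. rewrite !Hiter in E. auto.
Qed.

Lemma partB r d : forall (H : Type) (EH : H -> H -> Prop) (I : Type) (U : (I -> Prop) -> Prop),
      is_graph H EH ->
      ultrafilter I U ->
      TM r d (ultraprod I (fun _ => H) U) (ultraprod_rel I (fun _ => H) U (fun _ => EH)) ->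
      TM r d H EH.
Proof.
  intros H EH I U HG HU HT.
  apply (TM_induced r d _ _ H EH (fun x => @cls I (fun _ => H) U (fun _ => x)) HT).
  - destruct (TM_nonempty _ _ _ _ HT) as [w _]. destruct (uf_ne HU (uf_T HU (A := fun _ => True) (fun _ => Logic.I))) as [i _].
    exists (rep w i); auto.
  - intros x y E. apply (cls_eq HU) in E. destruct (uf_ne HU E) as [i Hi]; auto.
  - intros x y. unfold ultraprod_rel. split.
    + intros Hxy. exists (fun _ => x), (fun _ => y). simpl. repeat split; auto. apply (uf_T HU); auto.
    + intros (a&b&Ea&Eb&Hab). apply NNPP; intro Hn.
      assert (Ea' : @cls I (fun _ => H) U (fun _ => x) = cls a) by (apply sig_eq_iff; auto).
      assert (Eb' : @cls I (fun _ => H) U (fun _ => y) = cls b) by (apply sig_eq_iff; auto).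
      apply (cls_eq HU) in Ea', Eb'.
      destruct (uf_ne HU (uf_and HU (uf_and HU Ea' Eb') Hab)) as [i [[-> ->] ?]]; auto.
Qed.

Lemma uf_iff_on {I U} (HU : ultrafilter I U) (C P Q : I -> Prop) :
  U C -> (forall i, C i -> (P i <-> Q i)) -> (U P <-> U Q).
Proof. intros HC H. split; intros HP; apply (uf_up HU (uf_and HU HC HP)); intros i [H1 H2]; apply (H i H1); auto. Qed.

Lemma rel_cls {I V U} (HU : ultrafilter I U) (E : forall i, V i -> V i -> Prop) a b :
  ultraprod_rel I V U E (cls a) (cls b) <-> U (fun i => E i (a i) (b i)).
Proof.
  unfold ultraprod_rel. split.
  - intros (a'&b'&Ea&Eb&H).
    assert (Ea' : @cls I V U a = cls a') by (apply sig_eq_iff; auto).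
    assert (Eb' : @cls I V U b = cls b') by (apply sig_eq_iff; auto).
    apply (cls_eq HU) in Ea', Eb'.
    apply (uf_up HU (uf_and HU (uf_and HU Ea' Eb') H)). intros i [[-> ->] ?]; auto.
  - intros H. exists a, b. auto.
Qed.

Lemma iter_umap {I V U} (HU : ultrafilter I U) (F : forall i, V i -> V i) k a :
  Nat.iter k (umap F) (@cls I V U a) = cls (fun i => Nat.iter k (F i) (a i)).
Proof. induction k; simpl; auto. rewrite IHk. apply (umap_cls HU). Qed.

Lemma ulim_cls {I V U} (HU : ultrafilter I U) (h : forall i, V i -> nat) B a :
  (forall i x, h i x <= B) ->
  U (fun i => h i (a i) = ulim U (fun i => h i (rep (@cls I V U a) i))).
Proof.
  intros HB. apply (uf_up HU (uf_and HU (rep_of_cls HU a) (ulim_spec HU (fun i => h i (rep (@cls I V U a) i)) B (fun i => HB _ _)))).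
  intros i [E1 E2]. rewrite <- E1. auto.
Qed.

Lemma TM_ultra r d I U (HU : ultrafilter I U) (V : I -> Type) (E : forall i, V i -> V i -> Prop)
  (N : I -> Type) (root : forall i, N i) (par : forall i, N i -> N i) (dep lab : forall i, N i -> nat)
  (SS : I -> nat -> nat -> nat -> Prop) (f : forall i, tm_leaf (N i) (root i) (par i) -> V i)
  (HT : forall i, tree_model r d (N i) (root i) (par i) (dep i) (lab i) (SS i))
  (Hiso : forall i, graph_iso _ _ (tm_edge (N i) (root i) (par i) (lab i) (SS i)) (E i) (f i)) :
  TM r d (ultraprod I V U) (ultraprod_rel I V U E).
Proof.
  set (N' := ultraprod I N U).
  set (root' := @cls I N U root).
  set (par' := @umap I N N U par).
  set (dep' := fun P : N' => ulim U (fun i => dep i (rep P i))).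
  set (lab' := fun P : N' => ulim U (fun i => lab i (rep P i))).
  set (SS' := fun x y l => U (fun i => SS i x y l)).
  assert (Hdepc : forall a, U (fun i => dep i (a i) = dep' (cls a))).
  { intros a. apply (ulim_cls HU dep d a). intros i x. apply (HT i). }
  assert (Hlabc : forall a, U (fun i => lab i (a i) = lab' (cls a))).
  { intros a. apply (ulim_cls HU lab (S r) a). intros i x. apply (tm_lab_le _ _ _ _ _ _ _ _ (HT i)). }
  assert (Hparc : forall a, par' (cls a) = cls (fun i => par i (a i))).
  { intros a. apply (umap_cls HU). }
  assert (Hleafc : forall a, is_leaf N' root' par' (cls a) <-> U (fun i => is_leaf (N i) (root i) (par i) (a i))).
  { intros a. split.
    - intros L. apply NNPP; intro Hn. apply (uf_not HU) in Hn.
      set (b := fun i => epsilon (inhabits (a i)) (fun w => w <> root i /\ par i w = a i)).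
      assert (Hb : U (fun i => b i <> root i /\ par i (b i) = a i)).
      { apply (uf_up HU Hn). intros i Hi. apply NNPP in Hi. destruct Hi as [w Hw].
        apply (epsilon_spec (inhabits (a i)) (fun w => w <> root i /\ par i w = a i)). exists w; auto. }
      apply L. exists (cls b). split.
      + intro Eb. apply (cls_eq HU) in Eb. destruct (uf_ne HU (uf_and HU Eb Hb)) as [i [? [? ?]]]; auto.
      + rewrite Hparc. apply (cls_eq HU). apply (uf_up HU Hb). intros i [_ ?]; auto.
    - intros HL [w [Hw1 Hw2]]. destruct (cls_surj w) as [b ->].
      assert (Hb1 : U (fun i => b i <> root i)).
      { apply (uf_not HU). intro Hb. apply Hw1. apply (cls_eq HU). auto. }
      rewrite Hparc in Hw2. apply (cls_eq HU) in Hw2.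
      destruct (uf_ne HU (uf_and HU (uf_and HU Hb1 Hw2) HL)) as [i [[H1 H2] H3]].
      apply H3. exists (b i). split; auto. }
  assert (HTM : tree_model r d N' root' par' dep' lab' SS').
  { split; [|split; [|split; [|split; [|split; [|split]]]]].
    - split; [|split].
      + unfold root'. rewrite Hparc. apply (cls_eq HU). apply (uf_T HU). intros i. apply (HT i).
      + destruct (uf_ne HU (uf_and HU (Hdepc root) (uf_T HU (fun i => proj1 (proj2 (proj1 (HT i))))))) as [i [E1 E2]].
        fold root' in E1. congruence.
      + intros v Hv. destruct (cls_surj v) as [a ->].
        assert (Ha : U (fun i => a i <> root i)).
        { apply (uf_not HU). intro Hb. apply Hv. apply (cls_eq HU). auto. }
        rewrite Hparc.
        destruct (uf_ne HU (uf_and HU (uf_and HU Ha (Hdepc a)) (Hdepc (fun i => par i (a i))))) as [i [[H1 H2] H3]].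
        pose proof (HT i) as ((_&_&Hdp)&_). rewrite <- H2, <- H3. auto.
    - intros v. destruct (cls_surj v) as [a ->]. destruct (uf_ne HU (Hdepc a)) as [i Hi].
      rewrite <- Hi. apply (HT i).
    - intros v L. destruct (cls_surj v) as [a ->]. apply Hleafc in L.
      destruct (uf_ne HU (uf_and HU L (Hdepc a))) as [i [H1 H2]]. rewrite <- H2. apply (HT i); auto.
    - intros v L. destruct (cls_surj v) as [a ->]. apply Hleafc in L.
      destruct (uf_ne HU (uf_and HU L (Hlabc a))) as [i [H1 H2]]. rewrite <- H2. apply (HT i); auto.
    - intros v L. destruct (cls_surj v) as [a ->]. rewrite Hleafc in L. apply (uf_not HU) in L.
      destruct (uf_ne HU (uf_and HU L (Hlabc a))) as [i [H1 H2]]. rewrite <- H2. apply (HT i); auto.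
    - intros x y l Hs. destruct (uf_ne HU Hs) as [i Hi]. pose proof (HT i) as (_&_&_&_&_&HS1&_). apply HS1 in Hi. exact Hi.
    - intros x y l. unfold SS'. apply (uf_iff_on HU (fun _ => True)). apply (uf_T HU); auto.
      intros i _. apply (HT i). }
  exists N', root', par', dep', lab', SS'. split; auto.
  assert (Hinh : forall i, inhabited (V i)).
  { intros i. destruct (tm_has_leaf _ _ _ _ _ _ _ _ (HT i)) as [v Hv]. constructor. exact (f i (exist _ v Hv)). }
  set (v0 := fun i => epsilon (Hinh i) (fun _ => True)).
  set (gm := fun i (n : N i) => match excluded_middle_informative (is_leaf (N i) (root i) (par i) n) with
                                | left p => f i (exist _ n p) | right _ => v0 i end).
  assert (Hgm : forall i (x : tm_leaf (N i) (root i) (par i)), gm i (proj1_sig x) = f i x).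
  { intros i [x Lx]. unfold gm. simpl. destruct (excluded_middle_informative _) as [p|p].
    f_equal. apply sig_eq_iff; auto. contradiction. }
  assert (Hldh : forall a b l, leaf_dist_half N' par' (cls a) (cls b) l <->
             U (fun i => leaf_dist_half (N i) (par i) (a i) (b i) l)).
  { intros a b l. unfold leaf_dist_half, par', N'.
    assert (Hit : forall k, Nat.iter k (umap par) (@cls I N U a) = Nat.iter k (umap par) (cls b) <->
                   U (fun i => Nat.iter k (par i) (a i) = Nat.iter k (par i) (b i))).
    { intros k. rewrite !(iter_umap HU). apply (cls_eq HU). }
    rewrite Hit. split.
    - intros [H1 H2]. assert (H3 := uf_fin_all HU (fun k i => Nat.iter k (par i) (a i) <> Nat.iter k (par i) (b i)) l).
      apply (uf_up HU (uf_and HU H1 (H3 (fun k Hk => uf_not HU (fun E => H2 k Hk (proj2 (Hit k) E)))))).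
      intros i [? ?]; split; auto.
    - intros H. split. apply (uf_up HU H); intros i [? ?]; auto.
      intros k Hk Ek. apply Hit in Ek. destruct (uf_ne HU (uf_and HU H Ek)) as [i [[_ H2] H3]].
      apply (H2 k Hk H3). }
  assert (Hedge : forall a b, (exists l, leaf_dist_half N' par' (cls a) (cls b) l /\ SS' (lab' (cls a)) (lab' (cls b)) l) <->
             U (fun i => exists l, leaf_dist_half (N i) (par i) (a i) (b i) l /\ SS i (lab i (a i)) (lab i (b i)) l)).
  { intros a b. split.
    - intros [l [H1 H2]]. apply Hldh in H1.
      apply (uf_up HU (uf_and HU (uf_and HU H1 H2) (uf_and HU (Hlabc a) (Hlabc b)))).
      intros i [[H3 H4] [H5 H6]]. exists l. rewrite H5, H6. auto.
    - intros H. destruct (uf_fin_ex HU (fun l i => leaf_dist_half (N i) (par i) (a i) (b i) l /\ SS i (lab i (a i)) (lab i (b i)) l) (S d)) as [l [_ Hl]].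
      + apply (uf_up HU H). intros i [l Hl]. exists l. split; auto.
        pose proof (HT i) as (_&_&_&_&_&HS1&_). destruct Hl as [_ Hl]. apply HS1 in Hl. lia.
      + exists l. split. apply Hldh. apply (uf_up HU Hl); intros i [? ?]; auto.
        apply (uf_up HU (uf_and HU Hl (uf_and HU (Hlabc a) (Hlabc b)))).
        intros i [[_ H3] [H5 H6]]. rewrite <- H5, <- H6. auto. }
  exists (fun x : tm_leaf N' root' par' => umap gm (proj1_sig x)). split; [|split].
  - intros [v Lv] [w Lw]. simpl. destruct (cls_surj v) as [a ->]. destruct (cls_surj w) as [b ->].
    rewrite !(umap_cls HU). rewrite (cls_eq HU). intros Eg.
    apply sig_eq_iff. simpl. apply (cls_eq HU). apply Hleafc in Lv, Lw.
    apply (uf_up HU (uf_and HU Eg (uf_and HU Lv Lw))). intros i [Hg [La Lb]].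
    assert (Ef := Hgm i (exist _ _ La)). assert (Ef2 := Hgm i (exist _ _ Lb)). simpl in Ef, Ef2.
    rewrite Ef, Ef2 in Hg. apply (Hiso i) in Hg. apply sig_eq_iff in Hg. exact Hg.
  - intros w. destruct (cls_surj w) as [c ->].
    set (pre := fun i => proj1_sig (constructive_indefinite_description _ (proj1 (proj2 (Hiso i)) (c i)))).
    assert (Hpre : forall i, f i (pre i) = c i).
    { intros i. unfold pre. destruct (constructive_indefinite_description _ _); auto. }
    assert (L : is_leaf N' root' par' (cls (fun i => proj1_sig (pre i)))).
    { apply Hleafc. apply (uf_T HU). intros i. apply (proj2_sig (pre i)). }
    exists (exist _ _ L). simpl. rewrite (umap_cls HU). apply (cls_eq HU). apply (uf_T HU).
    intros i. rewrite Hgm. auto.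
  - intros [v Lv] [w Lw]. simpl. destruct (cls_surj v) as [a ->]. destruct (cls_surj w) as [b ->].
    rewrite !(umap_cls HU). rewrite (rel_cls HU). unfold tm_edge. simpl. rewrite Hedge.
    apply Hleafc in Lv, Lw.
    apply (uf_iff_on HU _ _ _ (uf_and HU Lv Lw)). intros i [La Lb].
    assert (Ea := Hgm i (exist _ _ La)). assert (Eb := Hgm i (exist _ _ Lb)). simpl in Ea, Eb.
    rewrite Ea, Eb.
    rewrite <- (proj2 (proj2 (Hiso i))). unfold tm_edge. simpl. tauto.
Qed.

Record TMdata (r d : nat) (V : Type) (E : V -> V -> Prop) := mkTMdata {
  tN : Type; troot : tN; tpar : tN -> tN; tdep : tN -> nat; tlab : tN -> nat;
  tS : nat -> nat -> nat -> Prop; tf : tm_leaf tN troot tpar -> V;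
  tmod : tree_model r d tN troot tpar tdep tlab tS;
  tiso : graph_iso (tm_leaf tN troot tpar) V (tm_edge tN troot tpar tlab tS) E tf }.

Lemma TM_data r d V E : TM r d V E -> inhabited (TMdata r d V E).
Proof. intros (N&root&par&dep&lab&SS&HT&f&Hf). constructor. exact (mkTMdata r d V E N root par dep lab SS f HT Hf). Qed.

Theorem theorem2 (r d : nat) :
  (* (a) closure under ultraproducts *)
  (forall (I : Type) (V : I -> Type) (E : forall i, V i -> V i -> Prop)
          (U : (I -> Prop) -> Prop),
      ultrafilter I U ->
      (forall i, is_graph (V i) (E i)) ->
      (forall i, TM r d (V i) (E i)) ->
      TM r d (ultraprod I V U) (ultraprod_rel I V U E)) /\
  (* (b) closure under ultraroots *)
  (forall (H : Type) (EH : H -> H -> Prop) (I : Type) (U : (I -> Prop) -> Prop),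
      is_graph H EH ->
      ultrafilter I U ->
      TM r d (ultraprod I (fun _ => H) U) (ultraprod_rel I (fun _ => H) U (fun _ => EH)) ->
      TM r d H EH).
Proof.
  split; [|apply partB].
  intros I V E U HU _ HT.
  set (D := fun i => epsilon (TM_data r d (V i) (E i) (HT i)) (fun _ => True)).
  apply (TM_ultra r d I U HU V E (fun i => tN _ _ _ _ (D i)) (fun i => troot _ _ _ _ (D i))
           (fun i => tpar _ _ _ _ (D i)) (fun i => tdep _ _ _ _ (D i)) (fun i => tlab _ _ _ _ (D i))
           (fun i => tS _ _ _ _ (D i)) (fun i => tf _ _ _ _ (D i))).
  - intros i. apply tmod.
  - intros i. apply tiso.
Qed.
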